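(* Let $\alpha>0$, $\nu:=\nu(\alpha)$, and let $(a_n)_{n\ge1}$ be a sequence of positive reals. Define $(\chi_t)_{t\ge1}$ inductively by $$\chi_t:=\max\Big\{a_t,\ \tfrac{t-1}{\alpha}\chi_1,\ \tfrac{t-2}{\alpha}\chi_2,\ \dots,\ \tfrac1\alpha\chi_{t-1}\Big\}$$ (so $\chi_1=a_1$). If $\lim_{n\to\infty}a_ne^{-\nu n}=0$, then there are constants $0<c'\le c<\infty$ such that $c'e^{\nu t}\le\chi_t\le ce^{\nu t}$ for all $t\ge1$; consequently $\lim_{t\to\infty}\frac{\log\chi_t}{t}=\nu$.
   Context: For $\alpha>0$, let $T=T(\alpha)\in\mathbb N$ be the unique positive integer with $\frac{(T-1)^T}{T^{T-1}}<\alpha\le\frac{T^{T+1}}{(T+1)^T}$, and define $\nu(\alpha):=\frac1T\log\frac T\alpha$. *)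

(* Defs.v *)
From Stdlib Require Import Reals Lra Lia List ClassicalEpsilon.
From Coquelicot Require Import Coquelicot.
Import ListNotations.
Open Scope R_scope.

Definition is_T (alpha : R) (T : nat) : Prop :=
  (1 <= T)%nat /\
  (INR T - 1) ^ T / INR T ^ (T - 1) < alpha /\
  alpha <= INR T ^ (T + 1) / (INR T + 1) ^ T.

Definition T_of (alpha : R) : nat := epsilon (inhabits 1%nat) (is_T alpha).

Definition nu (alpha : R) : R :=
  / INR (T_of alpha) * ln (INR (T_of alpha) / alpha).

(* chis a alpha n = [chi_1; ...; chi_n], where
   chi_t = max { a_t, (t-1)/alpha chi_1, ..., 1/alpha chi_(t-1) }. *)
Fixpoint chis (a : nat -> R) (alpha : R) (n : nat) : list R :=
  match n with
  | O => []
  | S m =>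
      let l := chis a alpha m in
      l ++ [fold_right Rmax (a (S m))
              (map (fun k => INR (S m - k) / alpha * nth (k - 1) l 0) (seq 1 m))]
  end.

(* chi_t for t >= 1 (index 0 is meaningless). *)
Definition chi (a : nat -> R) (alpha : R) (t : nat) : R :=
  nth (t - 1) (chis a alpha t) 0.

(* Main.v *)
Require Import Defs.
From Stdlib Require Import Reals.
From Coquelicot Require Import Coquelicot.
From Stdlib Require Import Lra Lia List ClassicalEpsilon Wf_nat.
Import ListNotations.
Open Scope R_scope.

Lemma exp_mul_INR (y : R) (n : nat) : exp (y * INR n) = exp y ^ n.
Proof.
  induction n as [|n IH].
  - simpl. rewrite Rmult_0_r, exp_0. reflexivity.
  - rewrite S_INR, Rmult_plus_distr_l, exp_plus, IH, Rmult_1_r. simpl. ring.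
Qed.

Lemma pow_lt_strict (a b : R) (n : nat) : 0 <= a < b -> (1 <= n)%nat -> a ^ n < b ^ n.
Proof.
  intros [Ha Hab] Hn. induction n as [|n IH]; [lia|].
  destruct n as [|n].
  - simpl. lra.
  - assert (IH' : a ^ S n < b ^ S n) by (apply IH; lia).
    assert (0 < b ^ S n) by (apply pow_lt; lra).
    change (a * a ^ S n < b * b ^ S n).
    assert (0 <= a ^ S n) by (apply pow_le; lra).
    nra.
Qed.

Definition bT (n : nat) : R := INR n ^ (n + 1) / (INR n + 1) ^ n.

Lemma bT_ge (n : nat) : (1 <= n)%nat -> INR n / 3 <= bT n.
Proof.
  intros Hn. set (r := INR n).
  assert (Hr : 0 < r) by (apply lt_0_INR; lia).
  assert (HP : (r + 1) ^ n <= 3 * r ^ n).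
  { replace (r + 1) with (r * (1 + / r)) by (field; lra).
    rewrite Rpow_mult_distr.
    assert (H1 : (1 + / r) ^ n <= exp (/ r) ^ n).
    { apply pow_incr. split.
      - assert (0 < / r) by (apply Rinv_0_lt_compat; lra). lra.
      - left. apply exp_ineq1. apply Rgt_not_eq, Rinv_0_lt_compat; lra. }
    rewrite <- exp_mul_INR in H1. fold r in H1.
    replace (/ r * r) with 1 in H1 by (field; lra).
    pose proof exp_le_3.
    assert (0 < r ^ n) by (apply pow_lt; lra).
    nra. }
  unfold bT. fold r. rewrite pow_add, pow_1.
  assert (0 < r ^ n) by (apply pow_lt; lra).
  assert (0 < (r + 1) ^ n) by (apply pow_lt; lra).
  unfold Rdiv. 
  apply Rle_trans with (r ^ n * r * / (3 * r ^ n)).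
  - right. field. lra.
  - apply Rmult_le_compat_l. nra.
    apply Rinv_le_contravar; lra.
Qed.

Lemma exists_T (alpha : R) : 0 < alpha -> exists T, is_T alpha T.
Proof.
  intros Ha.
  assert (HN : exists N, alpha <= bT N).
  { pose proof is_lim_seq_INR as H. apply is_lim_seq_spec in H.
    destruct (H (3 * alpha)) as [N HN].
    exists (Nat.max N 1). pose proof (HN (Nat.max N 1) ltac:(lia)).
    pose proof (bT_ge (Nat.max N 1) ltac:(lia)). lra. }
  destruct HN as [N HN]. revert HN. induction N as [|n IH]; intros HN.
  - unfold bT in HN. simpl in HN. replace (0 * 1 / 1) with 0 in HN by field. lra.
  - destruct (Rle_lt_dec alpha (bT n)) as [H|H]; [now apply IH|].
    exists (S n). unfold is_T. split; [lia|]. split.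
    + rewrite S_INR. replace (INR n + 1 - 1) with (INR n) by ring.
      replace (S n - 1)%nat with n by lia.
      unfold bT in H. rewrite Nat.add_1_r in H. exact H.
    + exact HN.
Qed.

Lemma key_ineq (alpha x : R) (T : nat) :
  0 < alpha -> is_T alpha T -> 0 < x -> x ^ T = INR T / alpha ->
  forall m, (1 <= m)%nat -> INR m <= alpha * x ^ m.
Proof.
  intros Ha [HT [Hlo Hup]] Hx HxT.
  set (t := INR T).
  assert (Ht : 1 <= t) by (unfold t; apply (le_INR 1); lia).
  assert (HaxT : alpha * x ^ T = t) by (rewrite HxT; unfold t; field; lra).
  assert (h1 : t + 1 <= t * x).
  { destruct (Rle_lt_dec (t + 1) (t * x)) as [h|h]; [exact h|exfalso].
    assert (H1 : (t * x) ^ T < (t + 1) ^ T) by (apply pow_lt_strict; [nra|lia]).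
    rewrite Rpow_mult_distr in H1.
    fold t in Hup. rewrite pow_add, pow_1 in Hup.
    set (P := (t + 1) ^ T) in *. set (Q := t ^ T) in *.
    assert (0 < P) by (unfold P; apply pow_lt; lra).
    assert (0 < Q) by (unfold Q; apply pow_lt; lra).
    assert (HPP : P * / P = 1) by (field; lra).
    assert (H2 : alpha * P <= Q * t).
    { unfold Rdiv in Hup. assert (0 < / P) by (apply Rinv_0_lt_compat; lra). nra. }
    assert (H3 : Q * x ^ T * alpha = Q * t) by (rewrite <- HaxT; ring).
    nra. }
  assert (hx1 : 1 < x) by nra.
  assert (h2 : (2 <= T)%nat -> (t - 1) * x <= t).
  { intros H2T.
    destruct (Rle_lt_dec ((t - 1) * x) t) as [h|h]; [exact h|exfalso].
    assert (Ht2 : 2 <= t) by (unfold t; apply (le_INR 2); lia).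
    assert (H1 : t ^ T < ((t - 1) * x) ^ T) by (apply pow_lt_strict; [nra|lia]).
    rewrite Rpow_mult_distr in H1.
    fold t in Hlo.
    assert (HTT : t ^ T = t ^ (T - 1) * t).
    { replace T with (S (T - 1)) at 1 by lia. simpl. ring. }
    set (P := (t - 1) ^ T) in *. set (Q := t ^ (T - 1)) in *.
    assert (0 < Q) by (unfold Q; apply pow_lt; lra).
    assert (0 <= P) by (unfold P; apply pow_le; lra).
    assert (HQQ : Q * / Q = 1) by (field; lra).
    assert (H2 : P < alpha * Q).
    { unfold Rdiv in Hlo. assert (0 < / Q) by (apply Rinv_0_lt_compat; lra). nra. }
    assert (H3 : P * x ^ T * alpha = P * t) by (rewrite <- HaxT; ring).
    rewrite HTT in H1.
    (* t*Q < P x^T ; multiply by alpha: alpha t Q < P t < alpha Q t *)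
    assert (H4 : alpha * (Q * t) < alpha * (P * x ^ T)) by (apply Rmult_lt_compat_l; lra).
    nra. }
  assert (up : forall k m, m = (T + k)%nat -> INR m <= alpha * x ^ m).
  { induction k as [|k IH]; intros m ->.
    - rewrite Nat.add_0_r. fold t. lra.
    - specialize (IH (T + k)%nat eq_refl).
      replace (T + S k)%nat with (S (T + k)) by lia.
      rewrite S_INR. simpl pow.
      set (s := INR (T + k)) in *.
      assert (Hs : t <= s) by (unfold s, t; apply le_INR; lia).
      assert (s * (t * x - t - 1) >= 0) by nra.
      assert (s * x >= s + 1) by nra.
      nra. }
  assert (down : forall k m, (m + k)%nat = T -> (1 <= m)%nat -> INR m <= alpha * x ^ m).
  { induction k as [|k IH]; intros m Hm Hm1.
    - rewrite Nat.add_0_r in Hm. subst m. fold t. lra.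
    - specialize (IH (S m) ltac:(lia) ltac:(lia)).
      rewrite S_INR in IH. simpl pow in IH.
      assert (H2 := h2 ltac:(lia)).
      set (s := INR m) in *.
      assert (Hs : s + 1 <= t) by (unfold s, t; rewrite <- S_INR; apply le_INR; lia).
      assert (Hs1 : 1 <= s) by (unfold s; apply (le_INR 1); lia).
      assert (0 < x ^ m) by (apply pow_lt; lra).
      assert (H5 : s * ((t - 1) * x) <= s * t) by (apply Rmult_le_compat_l; lra).
      assert (H6 : s * x * (t - 1) <= (s + 1) * (t - 1)) by nra.
      assert (H7 : s * x <= s + 1).
      { destruct (Rle_lt_dec (s * x) (s + 1)) as [h|h]; [exact h|].
        assert (t - 1 > 0) by lra. nra. }
      nra. }
  intros m Hm. destruct (Nat.le_gt_cases T m) as [h|h].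
  - apply (up (m - T)%nat). lia.
  - apply (down (T - m)%nat); lia.
Qed.

Lemma chis_S (a : nat -> R) (alpha : R) (m : nat) :
  chis a alpha (S m) = chis a alpha m ++
    [fold_right Rmax (a (S m))
       (map (fun k => INR (S m - k) / alpha * nth (k - 1) (chis a alpha m) 0) (seq 1 m))].
Proof. reflexivity. Qed.

Lemma chis_length a alpha n : length (chis a alpha n) = n.
Proof.
  induction n as [|n IH]; [reflexivity|].
  rewrite chis_S, length_app, IH. simpl. lia.
Qed.

Lemma chis_prefix a alpha k n : (k <= n)%nat -> exists r, chis a alpha n = chis a alpha k ++ r.
Proof.
  intros H. induction H as [|n H IH].
  - exists []. rewrite app_nil_r. reflexivity.
  - destruct IH as [r Hr]. rewrite chis_S, Hr, <- app_assoc. eexists; reflexivity.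
Qed.

Lemma chi_nth a alpha k n : (1 <= k <= n)%nat -> nth (k - 1) (chis a alpha n) 0 = chi a alpha k.
Proof.
  intros H. destruct (chis_prefix a alpha k n ltac:(lia)) as [r Hr].
  rewrite Hr, app_nth1. reflexivity. rewrite chis_length. lia.
Qed.

Lemma chi_S a alpha m :
  chi a alpha (S m) = fold_right Rmax (a (S m))
       (map (fun k => INR (S m - k) / alpha * chi a alpha k) (seq 1 m)).
Proof.
  unfold chi at 1. rewrite chis_S.
  replace (S m - 1)%nat with m by lia.
  rewrite app_nth2 by (rewrite chis_length; lia).
  rewrite chis_length, Nat.sub_diag. simpl nth.
  f_equal. apply map_ext_in. intros k Hk. apply in_seq in Hk.
  rewrite chi_nth by lia. reflexivity.
Qed.

Lemma fold_ge_base b l : b <= fold_right Rmax b l.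
Proof. induction l; simpl. lra. eapply Rle_trans; [exact IHl|apply Rmax_r]. Qed.

Lemma fold_ge_in b l y : In y l -> y <= fold_right Rmax b l.
Proof.
  induction l as [|z l IH]; simpl; [tauto|]. intros [<-|H].
  - apply Rmax_l.
  - eapply Rle_trans; [exact (IH H)|apply Rmax_r].
Qed.

Lemma fold_le b l B : b <= B -> (forall y, In y l -> y <= B) -> fold_right Rmax b l <= B.
Proof.
  induction l as [|z l IH]; simpl; intros Hb Hl; [exact Hb|].
  apply Rmax_lub; auto.
Qed.

Lemma chi_ge_a a alpha m : a (S m) <= chi a alpha (S m).
Proof. rewrite chi_S. apply fold_ge_base. Qed.

Lemma chi_ge_k a alpha m k : (1 <= k <= m)%nat ->
  INR (S m - k) / alpha * chi a alpha k <= chi a alpha (S m).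
Proof.
  intros Hk. rewrite chi_S. apply fold_ge_in. apply in_map_iff.
  exists k. split; [reflexivity|]. apply in_seq. lia.
Qed.

Lemma chi_le a alpha m B : a (S m) <= B ->
  (forall k, (1 <= k <= m)%nat -> INR (S m - k) / alpha * chi a alpha k <= B) ->
  chi a alpha (S m) <= B.
Proof.
  intros Ha Hk. rewrite chi_S. apply fold_le; [exact Ha|].
  intros y Hy. apply in_map_iff in Hy. destruct Hy as [k [<- Hk']].
  apply in_seq in Hk'. apply Hk. lia.
Qed.

Lemma fin_bound (u : nat -> R) (N : nat) : exists B, forall n, (n < N)%nat -> u n <= B.
Proof.
  induction N as [|N [B HB]].
  - exists 0. intros; lia.
  - exists (Rmax B (u N)). intros n Hn.
    destruct (Nat.eq_dec n N) as [->|h]; [apply Rmax_r|].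
    eapply Rle_trans; [apply HB; lia|apply Rmax_l].
Qed.

Lemma fin_min (u : nat -> R) (N : nat) : (forall n, (1 <= n <= N)%nat -> 0 < u n) ->
  exists c, 0 < c /\ forall n, (1 <= n <= N)%nat -> c <= u n.
Proof.
  induction N as [|N IH]; intros Hpos.
  - exists 1. split; [lra|]. intros; lia.
  - destruct IH as [c [Hc HcN]]. { intros; apply Hpos; lia. }
    exists (Rmin c (u (S N))). split.
    + apply Rmin_glb_lt; [lra|apply Hpos; lia].
    + intros n Hn. destruct (Nat.eq_dec n (S N)) as [->|h]; [apply Rmin_r|].
      eapply Rle_trans; [apply Rmin_l|apply HcN; lia].
Qed.

Theorem lemma4 (alpha : R) (a : nat -> R) :
  0 < alpha ->
  (forall n : nat, (1 <= n)%nat -> 0 < a n) ->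
  is_lim_seq (fun n : nat => a n * exp (- nu alpha * INR n)) (Finite 0) ->
  (exists c' c : R, 0 < c' /\ c' <= c /\
     forall t : nat, (1 <= t)%nat ->
       c' * exp (nu alpha * INR t) <= chi a alpha t <= c * exp (nu alpha * INR t)) /\
  is_lim_seq (fun t : nat => ln (chi a alpha t) / INR t) (Finite (nu alpha)).
Proof.
  intros Ha Hpos Hlim.
  set (T := T_of alpha).
  assert (HT : is_T alpha T) by (unfold T, T_of; apply epsilon_spec, exists_T, Ha).
  set (x := exp (nu alpha)).
  assert (Hx : 0 < x) by apply exp_pos.
  assert (HT1 : (1 <= T)%nat) by apply HT.
  assert (HxT : x ^ T = INR T / alpha).
  { unfold x. rewrite <- exp_mul_INR. unfold nu. fold T.
    assert (0 < INR T) by (apply lt_0_INR; lia).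
    replace (/ INR T * ln (INR T / alpha) * INR T) with (ln (INR T / alpha)) by (field; lra).
    apply exp_ln. apply Rdiv_lt_0_compat; lra. }
  assert (Hkey := key_ineq alpha x T Ha HT Hx HxT).
  assert (Hkey' : forall m, (1 <= m)%nat -> INR m / alpha <= x ^ m).
  { intros m Hm. specialize (Hkey m Hm). unfold Rdiv.
    apply Rmult_le_reg_l with alpha; [lra|].
    replace (alpha * (INR m * / alpha)) with (INR m) by (field; lra). lra. }
  assert (Hab : exists c, 1 <= c /\ forall n, (1 <= n)%nat -> a n <= c * x ^ n).
  { apply is_lim_seq_spec in Hlim. destruct (Hlim (mkposreal 1 Rlt_0_1)) as [N HN].
    destruct (fin_bound (fun n => a n / x ^ n) N) as [B HB].
    exists (Rmax 1 B). split; [apply Rmax_l|]. intros n Hn.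
    assert (Hxn : 0 < x ^ n) by (apply pow_lt; lra).
    assert (Hq : a n / x ^ n <= Rmax 1 B).
    { destruct (Nat.lt_ge_cases n N) as [h|h].
      - eapply Rle_trans; [apply HB, h|apply Rmax_r].
      - specialize (HN n h). simpl in HN.
        rewrite Ropp_mult_distr_l_reverse, exp_Ropp, exp_mul_INR in HN. fold x in HN.
        rewrite Rminus_0_r in HN. apply Rabs_lt_between in HN.
        unfold Rdiv. eapply Rle_trans; [|apply Rmax_l]. lra. }
    unfold Rdiv in Hq.
    apply Rmult_le_compat_r with (r := x ^ n) in Hq; [|lra].
    rewrite Rmult_assoc, Rinv_l in Hq by lra. lra. }
  destruct Hab as [c [Hc1 Hac]].
  assert (Hup : forall t, (1 <= t)%nat -> chi a alpha t <= c * x ^ t).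
  { intros t. induction t as [t IH] using (well_founded_induction lt_wf). intros Ht.
    destruct t as [|m]; [lia|].
    apply chi_le; [apply Hac; lia|].
    intros k Hk.
    assert (H1 := IH k ltac:(lia) ltac:(lia)).
    assert (H2 := Hkey' (S m - k)%nat ltac:(lia)).
    assert (0 <= INR (S m - k) / alpha) by (apply Rdiv_le_0_compat; [apply pos_INR|lra]).
    assert (0 < x ^ k) by (apply pow_lt; lra).
    replace (c * x ^ S m) with (x ^ (S m - k) * (c * x ^ k))
      by (assert (E : x ^ S m = x ^ (S m - k) * x ^ k)
            by (rewrite <- pow_add; f_equal; lia); rewrite E; ring).
    apply Rle_trans with (INR (S m - k) / alpha * (c * x ^ k)).
    - apply Rmult_le_compat_l; assumption.
    - apply Rmult_le_compat_r; nra. }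
  destruct (fin_min (fun n => a n / x ^ n) T) as [c0 [Hc0 Hc0T]].
  { intros n Hn. apply Rdiv_lt_0_compat; [apply Hpos; lia|apply pow_lt; lra]. }
  assert (Hlow : forall t, (1 <= t)%nat -> c0 * x ^ t <= chi a alpha t).
  { intros t. induction t as [t IH] using (well_founded_induction lt_wf). intros Ht.
    destruct t as [|m]; [lia|].
    assert (Hxt : 0 < x ^ S m) by (apply pow_lt; lra).
    destruct (Nat.le_gt_cases (S m) T) as [h|h].
    - specialize (Hc0T (S m) ltac:(lia)).
      eapply Rle_trans; [|apply chi_ge_a].
      unfold Rdiv in Hc0T.
      apply Rmult_le_compat_r with (r := x ^ S m) in Hc0T; [|lra].
      rewrite Rmult_assoc, Rinv_l in Hc0T by lra. lra.
    - set (k := (S m - T)%nat).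
      assert (H1 := IH k ltac:(unfold k; lia) ltac:(unfold k; lia)).
      assert (H2 := chi_ge_k a alpha m k ltac:(unfold k; lia)).
      replace (S m - k)%nat with T in H2 by (unfold k; lia).
      rewrite <- HxT in H2.
      assert (0 < x ^ T) by (apply pow_lt; lra).
      replace (c0 * x ^ S m) with (x ^ T * (c0 * x ^ k))
        by (assert (E : x ^ S m = x ^ T * x ^ k)
              by (rewrite <- pow_add; f_equal; unfold k; lia); rewrite E; ring).
      nra. }
  assert (Hc0c : c0 <= c).
  { specialize (Hup 1%nat ltac:(lia)). specialize (Hlow 1%nat ltac:(lia)).
    simpl in Hup, Hlow. nra. }
  split.
  - exists c0, c. split; [exact Hc0|]. split; [exact Hc0c|].
    intros t Ht. rewrite exp_mul_INR. fold x. split; auto.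
  - apply is_lim_seq_le_le_loc with
      (u := fun n => nu alpha + ln c0 * / INR n)
      (w := fun n => nu alpha + ln c * / INR n).
    + exists 1%nat. intros n Hn.
      assert (HnR : 0 < INR n) by (apply lt_0_INR; lia).
      assert (Hi : 0 < / INR n) by (apply Rinv_0_lt_compat; lra).
      specialize (Hup n Hn). specialize (Hlow n Hn).
      unfold x in Hup, Hlow. rewrite <- exp_mul_INR in Hup, Hlow.
      assert (He : 0 < exp (nu alpha * INR n)) by apply exp_pos.
      assert (Hc : 0 < c) by lra.
      assert (L1 : ln (c0 * exp (nu alpha * INR n)) <= ln (chi a alpha n))
        by (apply ln_le; [apply Rmult_lt_0_compat|]; lra).
      assert (L2 : ln (chi a alpha n) <= ln (c * exp (nu alpha * INR n)))
        by (apply ln_le; [nra|]; lra).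
      rewrite ln_mult, ln_exp in L1, L2 by lra.
      unfold Rdiv. split.
      * replace (nu alpha + ln c0 * / INR n) with ((ln c0 + nu alpha * INR n) * / INR n)
          by (field; lra).
        apply Rmult_le_compat_r; lra.
      * replace (nu alpha + ln c * / INR n) with ((ln c + nu alpha * INR n) * / INR n)
          by (field; lra).
        apply Rmult_le_compat_r; lra.
    + assert (Hinv : is_lim_seq (fun n => / INR n) 0).
      { apply (is_lim_seq_inv INR p_infty is_lim_seq_INR). discriminate. }
      replace (Finite (nu alpha)) with (Finite (nu alpha + ln c0 * 0)) by (f_equal; ring).
      apply is_lim_seq_plus'; [apply is_lim_seq_const|].
      apply is_lim_seq_mult'; [apply is_lim_seq_const|exact Hinv].
    + assert (Hinv : is_lim_seq (fun n => / INR n) 0).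
      { apply (is_lim_seq_inv INR p_infty is_lim_seq_INR). discriminate. }
      replace (Finite (nu alpha)) with (Finite (nu alpha + ln c * 0)) by (f_equal; ring).
      apply is_lim_seq_plus'; [apply is_lim_seq_const|].
      apply is_lim_seq_mult'; [apply is_lim_seq_const|exact Hinv].
Qed.
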